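(* Assume $\sigma_1(x)=\tfrac12\sigma_1''(0)(x-a_1)(x-b_1)$ and $\sigma_2(x)=\tfrac12\sigma_2''(0)(x-a_2)(x-b_2)$ with $\sigma_1''(0)\ne0$, $\sigma_2''(0)\ne0$ and real zeros satisfying $a_1<0<a_2\le b_2<b_1$, and assume $q^2\Lambda_q<0$, where $\Lambda_q=q^{-2}\Big[1+\frac{(1-q^{-1})\tau'(0)}{\frac12\sigma_1''(0)}\Big]$. Put $a=b_2$ and $b=q^{-1}b_1$, and suppose $q^{-N-1}a=b$ for some $N\in\mathbb{N}_0$. Let $$\rho(x)=|x|^{\iota}\frac{(qa/x,\,x/b;q)_\infty}{(a_1/x,\,x/a_2;q)_\infty},\qquad q^{\iota}=\frac{q^{-3}\sigma_2''(0)a_2}{\sigma_1''(0)b}.$$ Then there exist polynomials $P_0,\dots,P_N$, with $P_n$ of degree $n$ a solution of the q-EHT with $\lambda=\lambda_n$, and nonzero constants $d_n^2$, such that for $m,n\in\{0,\dots,N\}$ $$\int_a^{b}P_n(x)P_m(x)\rho(x)\,d_{q^{-1}}x=d_n^2\delta_{mn},$$ i.e. the $P_n$ are orthogonal with respect to $\rho$ supported on $\{q^{-k}a\}_{k=0}^N$.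
   Context: Throughout $0<q<1$. For a function $y$ and $\zeta\in\{q,q^{-1}\}$, $D_\zeta y(x)=\frac{y(x)-y(\zeta x)}{(1-\zeta)x}$ for $x\ne0$ and $D_\zeta y(0)=y'(0)$; $[n]_q=\frac{1-q^n}{1-q}$. Let $\sigma_1$ be a real polynomial of degree at most two, $\tau(x)=\tau'(0)x+\tau(0)$ a real polynomial with $\tau'(0)\ne0$, and $\sigma_2(x):=q[\sigma_1(x)+(1-q^{-1})x\tau(x)]$. The q-EHT with parameter $n$ is $\sigma_1(x)D_{q^{-1}}D_qy(x)+\tau(x)D_qy(x)+\lambda_ny(x)=0$, $\lambda_n=-[n]_q\big(\tau'(0)+\tfrac12[n-1]_{q^{-1}}\sigma_1''(0)\big)$. $(\alpha;q)_\infty=\prod_{k\ge0}(1-\alpha q^k)$, $(\alpha_1,\dots,\alpha_r;q)_\infty=\prod_i(\alpha_i;q)_\infty$. For an exponent defined by $q^{\iota}=c$ ($c\ne0$), $\iota$ is any complex number with $e^{\iota\ln q}=c$, and $|x|^{\iota}:=e^{\iota\ln|x|}$. For $a>0$ and $b=q^{-N-1}a$, the $q^{-1}$-Jackson integral is $\int_a^{b}f(x)\,d_{q^{-1}}x=(q^{-1}-1)a\sum_{k=0}^{N}q^{-k}f(q^{-k}a)$. *)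

(* Defs.v *)
From Stdlib Require Import Reals.
From Coquelicot Require Import Coquelicot.
Open Scope R_scope.

Definition cexp (z : C) : C :=
  (exp (Re z) * cos (Im z), exp (Re z) * sin (Im z)).

Definition cpow_abs (x : R) (iota : C) : C :=
  cexp (Cmult iota (RtoC (ln (Rabs x)))).

Fixpoint qpoch_fin (alpha q : R) (n : nat) : R :=
  match n with
  | O => 1
  | S n' => qpoch_fin alpha q n' * (1 - alpha * q ^ n')
  end.
Definition qpoch_inf (alpha q : R) : R := real (Lim_seq (qpoch_fin alpha q)).

Definition Dz (zeta : R) (y : R -> R) (x : R) : R :=
  if Req_EM_T x 0 then Derive y 0
  else (y x - y (zeta * x)) / ((1 - zeta) * x).

Definition qnum (q : R) (n : Z) : R := (1 - powerRZ q n) / (1 - q).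

Definition sigma1 (s0 s1 s2 : R) (x : R) : R := s2 * x ^ 2 + s1 * x + s0.
Definition tau (t0 t1 : R) (x : R) : R := t1 * x + t0.
Definition sigma2 (q s0 s1 s2 t0 t1 : R) (x : R) : R :=
  q * (sigma1 s0 s1 s2 x + (1 - / q) * x * tau t0 t1 x).

Definition lambda_n (q s0 s1 s2 t1 : R) (n : nat) : R :=
  - qnum q (Z.of_nat n)
    * (t1 + / 2 * qnum (/ q) (Z.of_nat n - 1) * Derive_n (sigma1 s0 s1 s2) 2 0).

Definition solves_qEHT (q s0 s1 s2 t0 t1 lam : R) (y : R -> R) : Prop :=
  forall x : R,
    sigma1 s0 s1 s2 x * Dz (/ q) (Dz q y) x + tau t0 t1 x * Dz q y x + lam * y x = 0.

Definition is_poly_deg (n : nat) (y : R -> R) : Prop :=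
  exists c : nat -> R, c n <> 0 /\ forall x, y x = sum_n (fun k => c k * x ^ k) n.

(* q^{-1}-Jackson integral from a to b = q^{-N-1} a *)
Definition jackson_qinv (q a : R) (N : nat) (f : R -> C) : C :=
  Cmult (RtoC ((/ q - 1) * a))
    (sum_n (fun k => Cmult (RtoC ((/ q) ^ k)) (f ((/ q) ^ k * a))) N).

Definition rho (q a b a1 a2 : R) (iota : C) (x : R) : C :=
  Cmult (cpow_abs x iota)
    (RtoC (qpoch_inf (q * a / x) q * qpoch_inf (x / b) q
           / (qpoch_inf (a1 / x) q * qpoch_inf (x / a2) q))).

(* Main.v *)
Require Import Defs.
From Stdlib Require Import Reals Lra Lia Psatz FunctionalExtensionality.
From Coquelicot Require Import Coquelicot.
Open Scope R_scope.

Lemma pow_le1 (q : R) (n : nat) : 0 <= q <= 1 -> q ^ n <= 1.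
Proof. intros H. induction n; simpl. lra. assert (0 <= q ^ n) by (apply pow_le; lra). nra. Qed.

Lemma qpoch_fin_S (al q : R) (n : nat) :
  qpoch_fin al q (S n) = (1 - al) * qpoch_fin (al * q) q n.
Proof.
  induction n; simpl. ring.
  simpl in IHn. rewrite IHn. ring.
Qed.

Lemma real_Rbar_mult (c : R) (l : Rbar) : real (Rbar_mult c l) = c * real l.
Proof.
  destruct l as [r| |]; simpl; try ring;
  unfold Rbar_mult, Rbar_mult'; repeat (destruct Rle_dec; try destruct Rle_lt_or_eq_dec); simpl; ring.
Qed.

Lemma qpoch_inf_S (al q : R) : qpoch_inf al q = (1 - al) * qpoch_inf (al * q) q.
Proof.
  unfold qpoch_inf. rewrite <- Lim_seq_incr_1.
  rewrite (Lim_seq_ext _ (fun n => (1 - al) * qpoch_fin (al * q) q n)).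
  2:{ intro n. apply qpoch_fin_S. }
  rewrite Lim_seq_scal_l. apply real_Rbar_mult.
Qed.

Lemma qpoch_fin_bound (be q : R) (n : nat) : 0 < q < 1 -> 0 <= be <= 1 ->
  0 <= qpoch_fin be q n <= 1 /\ 1 - be * (1 - q ^ n) / (1 - q) <= qpoch_fin be q n.
Proof.
  intros Hq Hb. induction n; simpl.
  - split; [lra|]. unfold Rdiv. replace (1 - 1) with 0 by ring. nra.
  - destruct IHn as [[H1 H2] H3].
    assert (0 < q ^ n) by (apply pow_lt; lra).
    assert (q ^ n <= 1) by (apply pow_le1; lra).
    assert (0 <= be * q ^ n <= 1) by nra.
    split; [nra|].
    assert (E : 1 - be * (1 - q * q ^ n) / (1 - q) = 1 - be * (1 - q ^ n) / (1 - q) - be * q ^ n)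
      by (field; lra).
    rewrite E. nra.
Qed.

Lemma qpoch_fin_split (al q : R) (M n : nat) :
  qpoch_fin al q (M + n) = qpoch_fin al q M * qpoch_fin (al * q ^ M) q n.
Proof.
  induction n.
  - rewrite Nat.add_0_r. simpl. ring.
  - rewrite Nat.add_succ_r. simpl. rewrite IHn. rewrite pow_add. ring.
Qed.

Lemma qpoch_fin_pos (al q : R) (n : nat) : 0 < q < 1 -> 0 <= al < 1 -> 0 < qpoch_fin al q n.
Proof.
  intros Hq Ha. induction n; simpl. lra.
  assert (0 < q ^ n) by (apply pow_lt; lra).
  assert (q ^ n <= 1) by (apply pow_le1; lra).
  assert (al * q ^ n < 1) by nra. nra.
Qed.

Lemma qpoch_fin_decr (al q : R) (n m : nat) : 0 < q < 1 -> 0 <= al < 1 -> (n <= m)%nat ->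
  qpoch_fin al q m <= qpoch_fin al q n.
Proof.
  intros Hq Ha Hnm. induction Hnm. lra.
  simpl. assert (0 < q ^ m) by (apply pow_lt; lra).
  assert (q ^ m <= 1) by (apply pow_le1; lra).
  pose proof (qpoch_fin_pos al q m Hq Ha).
  assert (0 <= al * q ^ m) by (apply Rmult_le_pos; lra).
  assert (qpoch_fin al q m * (al * q ^ m) >= 0) by (apply Rle_ge, Rmult_le_pos; lra). lra.
Qed.

Lemma qpoch_inf_nz (al q : R) : 0 < q < 1 -> 0 <= al < 1 -> qpoch_inf al q <> 0.
Proof.
  intros Hq Ha.
  assert (Hq1 : Rabs q < 1) by (rewrite Rabs_pos_eq; lra).
  assert (Hq2 : 0 < (1 - q) / 2) by lra.
  destruct (pow_lt_1_zero q Hq1 ((1 - q) / 2) Hq2) as [M HM].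
  specialize (HM M (le_n M)). rewrite Rabs_pos_eq in HM by (apply pow_le; lra).
  set (L := qpoch_fin al q M / 2).
  assert (HL : 0 < L) by (unfold L; pose proof (qpoch_fin_pos al q M Hq Ha); lra).
  assert (Hlow : forall n, L <= qpoch_fin al q n).
  { intro n. destruct (Nat.le_gt_cases M n) as [Hn|Hn].
    - replace n with (M + (n - M))%nat by lia. rewrite qpoch_fin_split.
      assert (0 < q ^ M) by (apply pow_lt; lra).
      assert (0 <= al * q ^ M <= 1) by (split; [nra|]; assert (q ^ M <= 1) by (apply pow_le1; lra); nra).
      destruct (qpoch_fin_bound (al * q ^ M) q (n - M) Hq H0) as [_ Hb].
      assert (0 < q ^ (n - M)) by (apply pow_lt; lra).
      assert (al * q ^ M * (1 - q ^ (n - M)) / (1 - q) <= 1/2).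
      { apply (Rmult_le_reg_r (1 - q)). lra. unfold Rdiv. rewrite Rmult_assoc, Rinv_l by lra.
        assert (al * q ^ M <= q ^ M) by nra. nra. }
      pose proof (qpoch_fin_pos al q M Hq Ha). unfold L. nra.
    - pose proof (qpoch_fin_decr al q n M Hq Ha ltac:(lia)).
      pose proof (qpoch_fin_pos al q M Hq Ha). unfold L. lra. }
  assert (Hup : forall n, qpoch_fin al q n <= 1).
  { intro n. pose proof (qpoch_fin_decr al q 0 n Hq Ha ltac:(lia)). simpl in H. lra. }
  unfold qpoch_inf.
  assert (H1 : Rbar_le L (Lim_seq (qpoch_fin al q))).
  { rewrite <- (Lim_seq_const L). apply Lim_seq_le_loc. exists O. intros; apply Hlow. }
  assert (H2 : Rbar_le (Lim_seq (qpoch_fin al q)) 1).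
  { rewrite <- (Lim_seq_const 1). apply Lim_seq_le_loc. exists O. intros; apply Hup. }
  destruct (Lim_seq (qpoch_fin al q)) as [r| |]; simpl in *; try contradiction. lra.
Qed.


Fixpoint psum (f : nat -> R) (n : nat) : R :=
  match n with O => f O | S m => psum f m + f (S m) end.

Definition ev (c : nat -> R) (n : nat) (x : R) : R := psum (fun k => c k * x ^ k) n.

Lemma sum_n_psum (f : nat -> R) (n : nat) : sum_n f n = psum f n.
Proof. induction n. now rewrite sum_O. rewrite sum_Sn, IHn. reflexivity. Qed.

Lemma psum_ext (f g : nat -> R) (n : nat) : (forall k, (k <= n)%nat -> f k = g k) -> psum f n = psum g n.
Proof. induction n; intros H; simpl. apply H; lia. rewrite IHn by (intros; apply H; lia). rewrite H by lia. reflexivity. Qed.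

Lemma psum_plus (f g : nat -> R) (n : nat) : psum (fun k => f k + g k) n = psum f n + psum g n.
Proof. induction n; simpl. ring. rewrite IHn. ring. Qed.

Lemma psum_scal (a : R) (f : nat -> R) (n : nat) : psum (fun k => a * f k) n = a * psum f n.
Proof. induction n; simpl. ring. rewrite IHn. ring. Qed.

Lemma psum_shift (f : nat -> R) (n : nat) : psum f (S n) = f O + psum (fun k => f (S k)) n.
Proof. induction n. simpl. ring. change (psum f (S (S n))) with (psum f (S n) + f (S (S n))).
  rewrite IHn. simpl. ring. Qed.

Lemma psum_zero (f : nat -> R) (n : nat) : (forall k, (k <= n)%nat -> f k = 0) -> psum f n = 0.
Proof. intros H. induction n; simpl. apply H; lia. rewrite IHn by (intros; apply H; lia). rewrite H by lia. ring. Qed.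

Lemma psum_extend (f : nat -> R) (s m : nat) : (forall k, (s < k)%nat -> f k = 0) -> (s <= m)%nat ->
  psum f m = psum f s.
Proof. intros H Hm. induction Hm. reflexivity. simpl. rewrite IHHm, H by lia. ring. Qed.

Definition supp (c : nat -> R) (s : nat) := forall k, (s < k)%nat -> c k = 0.

Lemma ev_extend (c : nat -> R) (s m1 m2 : nat) (x : R) : supp c s -> (s <= m1)%nat -> (s <= m2)%nat ->
  ev c m1 x = ev c m2 x.
Proof. intros H H1 H2. unfold ev. rewrite (psum_extend _ s m1), (psum_extend _ s m2); auto;
  intros k Hk; rewrite H by lia; ring. Qed.

Lemma ev_plus c d n x : ev (fun k => c k + d k) n x = ev c n x + ev d n x.
Proof. unfold ev. rewrite <- psum_plus. apply psum_ext. intros; ring. Qed.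

Lemma ev_scal a c n x : ev (fun k => a * c k) n x = a * ev c n x.
Proof. unfold ev. rewrite <- psum_scal. apply psum_ext. intros; ring. Qed.

Lemma ev_zero c n x : (forall k, c k = 0) -> ev c n x = 0.
Proof. intros H. unfold ev. apply psum_zero. intros; rewrite H; ring. Qed.

Definition sh (c : nat -> R) (k : nat) : R := match k with O => 0 | S j => c j end.

Lemma ev_sh c n x : x * ev c n x = ev (sh c) (S n) x.
Proof. unfold ev. rewrite psum_shift. simpl. rewrite <- psum_scal. apply Rminus_diag_uniq.
  replace (0 * 1 + psum (fun k : nat => c k * (x * x ^ k)) n) with (psum (fun k : nat => c k * (x * x ^ k)) n) by ring.
  rewrite (psum_ext (fun k => x * (c k * x ^ k)) (fun k : nat => c k * (x * x ^ k))) by (intros; ring). ring. Qed.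

Lemma supp_sh c s : supp c s -> supp (sh c) (S s).
Proof. intros H k Hk. destruct k. lia. simpl. apply H. lia. Qed.

Definition qn (r : R) (k : nat) : R := (1 - r ^ k) / (1 - r).
Definition dq (r : R) (c : nat -> R) (k : nat) : R := qn r (S k) * c (S k).

Lemma supp_dq r c s : supp c s -> supp (dq r c) s.
Proof. intros H k Hk. unfold dq. rewrite H by lia. ring. Qed.

Lemma ev_dq (r : R) c n x : x <> 0 -> r <> 1 ->
  (ev c (S n) x - ev c (S n) (r * x)) / ((1 - r) * x) = ev (dq r c) n x.
Proof.
  intros Hx Hr. unfold ev. 
  assert (E : psum (fun k => c k * x ^ k) (S n) - psum (fun k => c k * (r * x) ^ k) (S n)
            = psum (fun k => c k * (x ^ k - (r * x) ^ k)) (S n)).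
  { rewrite (psum_ext (fun k => c k * (x ^ k - (r * x) ^ k)) (fun k => c k * x^k + (-1) * (c k * (r*x)^k))) by (intros; ring).
    rewrite psum_plus, psum_scal. ring. }
  rewrite E, psum_shift. simpl.
  replace (c 0%nat * (1 - 1)) with 0 by ring. rewrite Rplus_0_l.
  unfold Rdiv. rewrite Rmult_comm, <- psum_scal. apply psum_ext. intros k _.
  unfold dq, qn. simpl. rewrite Rpow_mult_distr. field. split; auto. lra.
Qed.

Lemma ev_at0 c n : ev c n 0 = c O.
Proof. unfold ev. induction n; simpl. ring. rewrite IHn. ring. Qed.

Lemma ev_derive0 c n : is_derive (fun x => ev c n x) 0 (match n with O => 0 | S _ => c 1%nat end).
Proof.
  induction n.
  - unfold ev; simpl. apply (is_derive_ext (fun _ => c O * 1)). intros; reflexivity.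
    apply (is_derive_const (c O * 1) 0).
  - unfold ev; simpl. fold (ev c n).
    assert (Hd : is_derive (fun x => c (S n) * (x * x ^ n)) 0 (match n with O => c 1%nat | S _ => 0 end)).
    { apply (is_derive_ext (fun x => c (S n) * (x ^ (S n)))). intros; reflexivity.
      assert (H0 : is_derive (fun x => c (S n) * x ^ (S n)) 0 (c (S n) * (INR (S n) * one * 0 ^ pred (S n))))
        by (apply is_derive_scal, is_derive_pow; apply (@is_derive_id R_AbsRing)).
      destruct n.
      - simpl in H0. unfold one in H0; simpl in H0. replace (c 1%nat * (1 * 1 * 1)) with (c 1%nat) in H0 by ring. exact H0.
      - simpl pred in H0. rewrite pow_i in H0 by lia. rewrite Rmult_0_r, Rmult_0_r in H0. exact H0. }
    pose proof (is_derive_plus _ _ _ _ _ IHn Hd). 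
    replace (c 1%nat) with (plus (match n with O => 0 | S _ => c 1%nat end) (match n with O => c 1%nat | S _ => 0 end)).
    exact H. destruct n; unfold plus; simpl; ring.
Qed.

Lemma Dz_ev (r : R) c n x : r <> 1 -> Dz r (fun y => ev c (S n) y) x = ev (dq r c) n x.
Proof.
  intros Hr. unfold Dz. destruct (Req_EM_T x 0) as [->|Hx].
  - replace (Derive _ 0) with (c 1%nat) by (symmetry; apply is_derive_unique; apply (ev_derive0 c (S n))).
    rewrite ev_at0. unfold dq, qn. simpl. field. lra.
  - apply ev_dq; auto.
Qed.


Section Eig.
Variables (q s0 s1 s2 t0 t1 : R).

Definition Lam (k : nat) : R := -(s2 * qn (/ q) (k - 1) * qn q k + t1 * qn q k).
Definition alp (k : nat) : R := s1 * qn (/ q) k * qn q (S k) + t0 * qn q (S k).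
Definition bet (k : nat) : R := s0 * qn (/ q) (S k) * qn q (S (S k)).

Fixpoint gco (n m : nat) : R * R :=
  match m with
  | O => (1, 0)
  | S m' => let pr := gco n m' in
      (-(alp (n - S m') * fst pr + bet (n - S m') * snd pr) / (Lam n - Lam (n - S m')), fst pr)
  end.

Definition cf (n k : nat) : R := if Nat.leb k n then fst (gco n (n - k)) else 0.

Lemma cf_supp n : supp (cf n) n.
Proof. intros k Hk. unfold cf. destruct (Nat.leb_spec k n). lia. reflexivity. Qed.

Lemma cf_n n : cf n n = 1.
Proof. unfold cf. rewrite Nat.leb_refl, Nat.sub_diag. reflexivity. Qed.

Lemma cf_rec n : (forall k, (k < n)%nat -> Lam n - Lam k <> 0) ->
  forall k, (Lam n - Lam k) * cf n k + alp k * cf n (S k) + bet k * cf n (S (S k)) = 0.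
Proof.
  intros Hd k. destruct (Nat.lt_trichotomy k n) as [Hk|[Hk|Hk]].
  - unfold cf at 1. destruct (Nat.leb_spec k n); [|lia].
    replace (n - k)%nat with (S (n - S k)) by lia. simpl.
    replace (n - S (n - S k))%nat with k by lia.
    assert (E1 : fst (gco n (n - S k)) = cf n (S k)).
    { unfold cf. destruct (Nat.leb_spec (S k) n); [reflexivity|lia]. }
    assert (E2 : snd (gco n (n - S k)) = cf n (S (S k))).
    { unfold cf. destruct (Nat.leb_spec (S (S k)) n).
      - replace (n - S k)%nat with (S (n - S (S k))) by lia. reflexivity.
      - replace (n - S k)%nat with O by lia. reflexivity. }
    rewrite E1, E2. field. apply Hd; auto.
  - subst k. rewrite cf_n, !(cf_supp n) by lia. ring.
  - rewrite !(cf_supp n) by lia. ring.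
Qed.

End Eig.

Lemma qn0 r : qn r 0 = 0.
Proof. unfold qn. simpl. unfold Rdiv. ring. Qed.

Lemma ev_sh_ext c s L x : supp c s -> (S s <= L)%nat -> x * ev c L x = ev (sh c) L x.
Proof. intros H HL. rewrite ev_sh. apply (ev_extend _ (S s)). apply supp_sh, H. lia. lia. Qed.

Lemma solves (q s0 s1 s2 t0 t1 : R) (n : nat) : 0 < q < 1 ->
  (forall k, (k < n)%nat -> Lam q s2 t1 n - Lam q s2 t1 k <> 0) ->
  solves_qEHT q s0 s1 s2 t0 t1 (Lam q s2 t1 n) (fun x => ev (cf q s0 s1 s2 t0 t1 n) n x).
Proof.
  intros Hq Hd. set (c := cf q s0 s1 s2 t0 t1 n).
  assert (Hc : supp c n) by apply cf_supp.
  assert (Hq1 : q <> 1) by lra. assert (Hp1 : / q <> 1).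
  { intro E. assert (q = 1). rewrite <- (Rinv_inv q), E. apply Rinv_1. lra. }
  set (d := dq q c). set (e := dq (/ q) d).
  assert (Hdd : supp d n) by (apply supp_dq, Hc).
  assert (Hee : supp e n) by (apply supp_dq, Hdd).
  assert (Ey : (fun x => ev c n x) = (fun x => ev c (S (S (S n))) x)).
  { apply functional_extensionality. intro x. apply (ev_extend _ n); auto; lia. }
  assert (Ed : Dz q (fun x => ev c n x) = (fun x => ev d (S (S n)) x)).
  { rewrite Ey. apply functional_extensionality. intro x. apply Dz_ev. auto. }
  assert (Ee : Dz (/ q) (Dz q (fun x => ev c n x)) = (fun x => ev e (S n) x)).
  { rewrite Ed. apply functional_extensionality. intro x. apply Dz_ev. auto. }
  intro x. rewrite Ee, Ed.
  set (L := S (S (S (S (S n))))).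
  rewrite (ev_extend c n n L) by (auto; unfold L; lia).
  rewrite (ev_extend d n (S (S n)) L) by (auto; unfold L; lia).
  rewrite (ev_extend e n (S n) L) by (auto; unfold L; lia).
  unfold sigma1, tau.
  replace ((s2 * x ^ 2 + s1 * x + s0) * ev e L x + (t1 * x + t0) * ev d L x + Lam q s2 t1 n * ev c L x)
    with (s2 * (x * (x * ev e L x)) + s1 * (x * ev e L x) + s0 * ev e L x + t1 * (x * ev d L x)
          + t0 * ev d L x + Lam q s2 t1 n * ev c L x) by ring.
  rewrite (ev_sh_ext e n L x) by (auto; unfold L; lia).
  rewrite (ev_sh_ext (sh e) (S n) L x) by (try apply supp_sh; auto; unfold L; lia).
  rewrite (ev_sh_ext d n L x) by (auto; unfold L; lia).
  rewrite <- !ev_scal, <- !ev_plus. apply ev_zero. intro k.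
  pose proof (cf_rec q s0 s1 s2 t0 t1 n Hd) as R. fold c in R.
  assert (Hq0 : q <> 0) by lra.
  destruct k as [|[|k]]; simpl sh; unfold e, d, dq.
  - specialize (R O). etransitivity; [|exact R]. unfold Lam, alp, bet, qn. simpl. field. split; [|lra].
    intro E. apply Hp1. lra.
  - specialize (R 1%nat). etransitivity; [|exact R]. unfold Lam, alp, bet, qn. simpl. field. split; [|lra].
    intro E. apply Hp1. lra.
  - specialize (R (S (S k))). etransitivity; [|exact R]. unfold Lam, alp, bet, qn.
    replace (S (S k) - 1)%nat with (S k) by lia. field. split; [|lra].
    intro E. apply Hp1. lra.
Qed.

Lemma Lam_G q s2 t1 k : 0 < q < 1 ->
  Lam q s2 t1 k = -(1 - q ^ k) * (s2 * q * (q - q ^ k) / q ^ k + t1 * (1 - q)) / (1 - q) ^ 2.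
Proof.
  intros Hq. assert (0 < q ^ k) by (apply pow_lt; lra).
  unfold Lam, qn. destruct k.
  - simpl. field. lra.
  - replace (S k - 1)%nat with k by lia. rewrite pow_inv. simpl.
    assert (0 < q ^ k) by (apply pow_lt; lra).
    field. repeat split; try lra.
Qed.

Lemma pow_decr_strict q k n : 0 < q < 1 -> (k < n)%nat -> q ^ n < q ^ k.
Proof.
  intros Hq H. replace n with (k + (n - k))%nat by lia. rewrite pow_add.
  assert (0 < q ^ k) by (apply pow_lt; lra).
  destruct (pow_lt_1_compat q (n - k) ltac:(lra) ltac:(lia)). nra.
Qed.

Lemma Lam_neq q s2 t1 k n : 0 < q < 1 -> s2 * (q * s2 - (1 - q) * t1) < 0 -> (k < n)%nat ->
  Lam q s2 t1 n - Lam q s2 t1 k <> 0.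
Proof.
  intros Hq Hs Hk. rewrite !Lam_G by auto.
  pose proof (pow_decr_strict q k n Hq Hk).
  assert (0 < q ^ n) by (apply pow_lt; lra).
  set (u := q ^ n) in *. set (v := q ^ k) in *.
  assert (E : -(1 - u) * (s2 * q * (q - u) / u + t1 * (1 - q)) / (1 - q) ^ 2 -
    -(1 - v) * (s2 * q * (q - v) / v + t1 * (1 - q)) / (1 - q) ^ 2 =
    (u - v) * (s2 * q ^ 2 + (t1 * (1 - q) - s2 * q) * u * v) / (u * v * (1 - q) ^ 2)).
  { field. repeat split; lra. }
  rewrite E. intro Z. unfold Rdiv in Z. apply Rmult_integral in Z. destruct Z as [Z|Z].
  - apply Rmult_integral in Z. destruct Z as [Z|Z]. lra.
    assert (s2 * (s2 * q ^ 2 + (t1 * (1 - q) - s2 * q) * u * v) > 0).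
    { assert (s2 <> 0) by (intro; subst; lra). assert (0 < s2 * s2) by nra.
      assert (0 < u * v) by nra. 
      replace (s2 * (s2 * q ^ 2 + (t1 * (1 - q) - s2 * q) * u * v)) with
        (s2 * s2 * q ^ 2 + (- (s2 * (q * s2 - (1 - q) * t1))) * (u * v)) by ring.
      assert (0 < q^2) by nra. nra. }
    rewrite Z in H1. lra.
  - assert (u * v * (1 - q) ^ 2 <> 0). { assert (0 < u*v) by nra. assert (0 < (1-q)^2) by nra. nra. }
    apply Rinv_neq_0_compat in H1. lra.
Qed.

Lemma lambda_eq q s0 s1 s2 t1 n : 0 < q < 1 -> Derive_n (sigma1 s0 s1 s2) 2 0 = 2 * s2 ->
  lambda_n q s0 s1 s2 t1 n = Lam q s2 t1 n.
Proof.
  intros Hq HD. unfold lambda_n, Lam, qnum. rewrite HD.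
  destruct n.
  - simpl. unfold qn. simpl. unfold Rdiv. ring.
  - replace (Z.of_nat (S n) - 1)%Z with (Z.of_nat n) by lia.
    rewrite <- !pow_powerRZ. replace (S n - 1)%nat with n by lia. unfold qn. field.
    repeat split; try lra.
Qed.


Fixpoint sumlt (h : nat -> R) (n : nat) : R :=
  match n with O => 0 | S m => sumlt h m + h m end.

Lemma sbp (w A B f g : nat -> R) (N : nat) :
  w O * B O = 0 -> (forall k, (k < N)%nat -> w (S k) * B (S k) = w k * A k) ->
  psum (fun k => w k * A k * g k * (f (S k) - f k) + w k * B k * g k * (f (k - 1)%nat - f k)) N
  = - sumlt (fun j => w j * A j * (g (S j) - g j) * (f (S j) - f j)) N + w N * A N * g N * (f (S N) - f N).
Proof.
  intros H0 Hb. induction N.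
  - simpl. rewrite H0. ring.
  - simpl psum. rewrite IHN by (intros; apply Hb; lia). simpl sumlt.
    replace (S N - 1)%nat with N by lia. rewrite Hb by lia. rewrite Nat.sub_0_r. ring.
Qed.

Lemma sbp_sym (w A B f g : nat -> R) (N : nat) :
  w O * B O = 0 -> (forall k, (k < N)%nat -> w (S k) * B (S k) = w k * A k) -> A N = 0 ->
  psum (fun k => w k * g k * (A k * (f (S k) - f k) + B k * (f (k - 1)%nat - f k))) N
  = psum (fun k => w k * f k * (A k * (g (S k) - g k) + B k * (g (k - 1)%nat - g k))) N.
Proof.
  intros H0 Hb HA.
  rewrite (psum_ext _ (fun k => w k * A k * g k * (f (S k) - f k) + w k * B k * g k * (f (k - 1)%nat - f k))) by (intros; ring).
  rewrite (psum_ext (fun k => w k * f k * _) (fun k => w k * A k * f k * (g (S k) - g k) + w k * B k * f k * (g (k - 1)%nat - g k))) by (intros; ring).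
  rewrite !sbp by auto. rewrite HA.
  assert (E : forall n, sumlt (fun j => w j * A j * (g (S j) - g j) * (f (S j) - f j)) n =
      sumlt (fun j => w j * A j * (f (S j) - f j) * (g (S j) - g j)) n).
  { induction n; simpl. reflexivity. rewrite IHn. ring. }
  rewrite E. ring.
Qed.

Lemma orth_grid (w A B f g : nat -> R) (lf lg : R) (N : nat) :
  w O * B O = 0 -> (forall k, (k < N)%nat -> w (S k) * B (S k) = w k * A k) -> A N = 0 ->
  (forall k, (k <= N)%nat -> A k * (f (S k) - f k) + B k * (f (k - 1)%nat - f k) = - lf * f k) ->
  (forall k, (k <= N)%nat -> A k * (g (S k) - g k) + B k * (g (k - 1)%nat - g k) = - lg * g k) ->
  lf <> lg -> psum (fun k => w k * f k * g k) N = 0.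
Proof.
  intros H0 Hb HA Hf Hg Hl.
  pose proof (sbp_sym w A B f g N H0 Hb HA) as E.
  rewrite (psum_ext _ (fun k => (- lf) * (w k * f k * g k))) in E by (intros; rewrite Hf by auto; ring).
  rewrite (psum_ext (fun k => w k * f k * _) (fun k => (- lg) * (w k * f k * g k))) in E by (intros; rewrite Hg by auto; ring).
  rewrite !psum_scal in E.
  apply (Rmult_eq_reg_l (lg - lf)). lra. lra.
Qed.

Lemma psum_nonneg_zero (f : nat -> R) (N : nat) : (forall k, (k <= N)%nat -> 0 <= f k) ->
  psum f N = 0 -> forall k, (k <= N)%nat -> f k = 0.
Proof.
  intros Hp. induction N; simpl; intros H k Hk.
  - replace k with O by lia. auto.
  - assert (0 <= psum f N).
    { clear -Hp. induction N; simpl. apply Hp; lia. assert (0 <= f (S N)) by (apply Hp; lia).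
      assert (0 <= psum f N) by (apply IHN; intros; apply Hp; lia). lra. }
    assert (0 <= f (S N)) by (apply Hp; lia).
    destruct (Nat.eq_dec k (S N)) as [->|Hne]. lra.
    apply IHN. intros; apply Hp; lia. lra. lia.
Qed.

Definition xk (q b2 : R) (k : nat) : R := (/ q) ^ k * b2.

Lemma xk_prev q b2 k : q <> 0 -> q * xk q b2 (S k) = xk q b2 k.
Proof. intros Hq. unfold xk. simpl. field. auto. Qed.

Lemma xk_pos q b2 k : 0 < q -> 0 < b2 -> 0 < xk q b2 k.
Proof. intros. unfold xk. apply Rmult_lt_0_compat; auto. apply pow_lt. apply Rinv_0_lt_compat. auto. Qed.

Lemma qn_pos q k : 0 < q < 1 -> 0 < qn q (S k).
Proof. intros Hq. unfold qn. destruct (pow_lt_1_compat q (S k) ltac:(lra) ltac:(lia)).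
  apply Rdiv_lt_0_compat; lra. Qed.

Lemma vanish q b2 : 0 < q < 1 -> 0 < b2 -> forall m c s, supp c m ->
  (forall k, (s <= k <= s + m)%nat -> ev c m (xk q b2 k) = 0) -> c m = 0.
Proof.
  intros Hq Hb. induction m; intros c s Hc Hz.
  - specialize (Hz s ltac:(lia)). unfold ev in Hz. simpl in Hz. lra.
  - assert (Hd : dq q c m = 0).
    { apply (IHm _ (S s)). intros k Hk. unfold dq. rewrite Hc by lia. ring.
      intros k Hk. destruct k as [|k]. lia.
      rewrite <- ev_dq. rewrite xk_prev by lra. rewrite !Hz by lia. unfold Rdiv. ring.
      pose proof (xk_pos q b2 (S k) ltac:(lra) Hb). lra. lra. }
    unfold dq in Hd. pose proof (qn_pos q m Hq). 
    apply Rmult_integral in Hd. destruct Hd; [lra|auto].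
Qed.


Lemma cexp_add (z w : C) : cexp (Cplus z w) = Cmult (cexp z) (cexp w).
Proof.
  destruct z as [a b], w as [c d]. unfold cexp, Cplus, Cmult; simpl.
  rewrite exp_plus, cos_plus, sin_plus. f_equal; ring.
Qed.

Lemma csum (r : nat -> R) (Z : nat -> C) (Z0 : C) (s : nat -> R) (N : nat) :
  (forall k, (k <= N)%nat -> Z k = Cmult Z0 (RtoC (s k))) ->
  sum_n (fun k => Cmult (RtoC (r k)) (Z k)) N = Cmult Z0 (RtoC (psum (fun k => r k * s k) N)).
Proof.
  intros H. induction N.
  - rewrite sum_O. simpl. rewrite H by lia. destruct Z0 as [a b]. unfold Cmult, RtoC; simpl. f_equal; ring.
  - rewrite sum_Sn, IHN by (intros; apply H; lia). rewrite H by lia. simpl psum.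
    destruct Z0 as [a b]. unfold plus; simpl. unfold Cplus, Cmult, RtoC; simpl. f_equal; ring.
Qed.

Lemma cpow_step (io : C) (x y R0 : R) (q : R) : 0 < q -> 0 < y -> x = q * y ->
  cexp (Cmult io (RtoC (ln q))) = RtoC R0 ->
  cpow_abs x io = Cmult (cpow_abs y io) (RtoC R0).
Proof.
  intros Hq Hy Hx HR. unfold cpow_abs. rewrite <- HR, <- cexp_add. f_equal.
  rewrite Hx, !Rabs_pos_eq by nra. rewrite ln_mult by nra.
  destruct io as [a b]. unfold Cmult, Cplus, RtoC; simpl. f_equal; ring.
Qed.

Lemma cexp_nz (z : C) : cexp z <> RtoC 0.
Proof.
  destruct z as [a b]. unfold cexp, RtoC. simpl. intro E. injection E as E1 E2.
  pose proof (exp_pos a). pose proof (sin2_cos2 b). unfold Rsqr in H0.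
  apply Rmult_integral in E1; apply Rmult_integral in E2. nra.
Qed.

Lemma cmult_real_nz (z : C) (r : R) : z <> RtoC 0 -> r <> 0 -> Cmult z (RtoC r) <> RtoC 0.
Proof.
  destruct z as [a b]. unfold Cmult, RtoC; simpl. intros Hz Hr E. injection E as E1 E2.
  apply Hz. f_equal. 
  - apply (Rmult_eq_reg_r r); [|auto]. lra.
  - apply (Rmult_eq_reg_r r); [|auto]. lra.
Qed.

Lemma real_cmult_nz (z : C) (r : R) : z <> RtoC 0 -> r <> 0 -> Cmult (RtoC r) z <> RtoC 0.
Proof.
  destruct z as [a b]. unfold Cmult, RtoC; simpl. intros Hz Hr E. injection E as E1 E2.
  apply Hz. f_equal. 
  - apply (Rmult_eq_reg_l r); [|auto]. lra.
  - apply (Rmult_eq_reg_l r); [|auto]. lra.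
Qed.

Fixpoint prodseq (F : nat -> R) (k : nat) : R :=
  match k with O => 1 | S j => prodseq F j * F j end.

Definition Rr (q a b a1 a2 x : R) : R :=
  qpoch_inf (q * a / x) q * qpoch_inf (x / b) q / (qpoch_inf (a1 / x) q * qpoch_inf (x / a2) q).

Lemma rho_Rr q a b a1 a2 io x : rho q a b a1 a2 io x = Cmult (cpow_abs x io) (RtoC (Rr q a b a1 a2 x)).
Proof. reflexivity. Qed.

Lemma Rr_step q a b a1 a2 x : 0 < q < 1 -> 0 < a <= x -> a1 < 0 -> 0 < a2 -> b <> 0 ->
  qpoch_inf (a1 / x) q * qpoch_inf (x / a2) q <> 0 ->
  qpoch_inf (a1 / (/ q * x)) q * qpoch_inf ((/ q * x) / a2) q <> 0 ->
  Rr q a b a1 a2 (/ q * x) = Rr q a b a1 a2 x *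
    ((1 - (/ q * x) / b) * (1 - a1 / x) / ((1 - q * a / x) * (1 - (/ q * x) / a2))).
Proof.
  intros Hq Hx Ha1 Ha2 Hb H1 H2. set (y := / q * x) in *.
  assert (Hx0 : x <> 0) by lra. assert (Hq0 : q <> 0) by lra.
  assert (e1 : qpoch_inf (q * a / x) q = (1 - q * a / x) * qpoch_inf (q * a / y) q).
  { rewrite qpoch_inf_S. replace ((q * a / x) * q) with (q * a / y) by (unfold y; field; split; lra). reflexivity. }
  assert (e2 : qpoch_inf (y / b) q = (1 - y / b) * qpoch_inf (x / b) q).
  { rewrite qpoch_inf_S. replace ((y / b) * q) with (x / b) by (unfold y; field; split; lra). reflexivity. }
  assert (e3 : qpoch_inf (a1 / x) q = (1 - a1 / x) * qpoch_inf (a1 / y) q).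
  { rewrite qpoch_inf_S. replace ((a1 / x) * q) with (a1 / y) by (unfold y; field; split; lra). reflexivity. }
  assert (e4 : qpoch_inf (y / a2) q = (1 - y / a2) * qpoch_inf (x / a2) q).
  { rewrite qpoch_inf_S. replace ((y / a2) * q) with (x / a2) by (unfold y; field; split; lra). reflexivity. }
  rewrite e3 in H1. rewrite e4 in H2.
  unfold Rr. rewrite e1, e2, e3, e4.
  assert (1 - q * a / x <> 0).
  { assert (q * a / x < 1). { apply (Rmult_lt_reg_r x). lra. unfold Rdiv. rewrite Rmult_assoc, Rinv_l by auto. nra. } lra. }
  assert (Hy : 1 - y / a2 <> 0) by (intro Z; apply H2; rewrite Z; ring).
  assert (HG1 : qpoch_inf (a1 / y) q <> 0) by (intro Z; apply H1; rewrite Z; ring).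
  assert (HG2 : qpoch_inf (x / a2) q <> 0) by (intro Z; apply H1; rewrite Z; ring).
  field. repeat split; try lra; auto.
  - intro Z. apply Hy. replace y with a2 by lra. field. lra.
  - nra.
Qed.


Definition Aco (q s0 s1 s2 : R) (x : R) : R :=
  - sigma1 s0 s1 s2 x / ((1 - / q) * (1 - q) * / q * x ^ 2).
Definition Bco (q s0 s1 s2 t0 t1 : R) (x : R) : R :=
  - sigma2 q s0 s1 s2 t0 t1 x / (q * (1 - / q) * (1 - q) * x ^ 2).

Lemma grid_eq q s0 s1 s2 t0 t1 lam y x : 0 < q < 1 -> x <> 0 ->
  solves_qEHT q s0 s1 s2 t0 t1 lam y ->
  Aco q s0 s1 s2 x * (y (/ q * x) - y x) + Bco q s0 s1 s2 t0 t1 x * (y (q * x) - y x) = - lam * y x.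
Proof.
  intros Hq Hx H. specialize (H x). unfold Dz in H.
  destruct (Req_EM_T x 0) as [|_]; [contradiction|].
  destruct (Req_EM_T (/ q * x) 0) as [Z|_].
  { apply Rmult_integral in Z. destruct Z as [Z|Z]; [|contradiction].
    apply Rinv_neq_0_compat in Z; lra. }
  replace (q * (/ q * x)) with x in H by (field; lra).
  assert (Hp : 1 - / q <> 0).
  { intro E. assert (/ q = 1) by lra. assert (q = 1). rewrite <- (Rinv_inv q), H0. apply Rinv_1. lra. }
  match type of H with ?L = 0 =>
    assert (E : Aco q s0 s1 s2 x * (y (/ q * x) - y x) + Bco q s0 s1 s2 t0 t1 x * (y (q * x) - y x) + lam * y x = L) end.
  { unfold Aco, Bco, sigma2. field. repeat split; try lra; auto. }
  lra.
Qed.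

Theorem theorem4p6 (q s0 s1 s2 t0 t1 a1 b1 a2 b2 : R) (N : nat) (iota : C) :
  0 < q < 1 ->
  t1 <> 0 ->
  Derive_n (sigma1 s0 s1 s2) 2 0 <> 0 ->
  Derive_n (sigma2 q s0 s1 s2 t0 t1) 2 0 <> 0 ->
  (forall x, sigma1 s0 s1 s2 x = / 2 * Derive_n (sigma1 s0 s1 s2) 2 0 * (x - a1) * (x - b1)) ->
  (forall x, sigma2 q s0 s1 s2 t0 t1 x
             = / 2 * Derive_n (sigma2 q s0 s1 s2 t0 t1) 2 0 * (x - a2) * (x - b2)) ->
  a1 < 0 -> 0 < a2 -> a2 <= b2 -> b2 < b1 ->
  q ^ 2 * ((/ q) ^ 2 * (1 + (1 - / q) * t1 / (/ 2 * Derive_n (sigma1 s0 s1 s2) 2 0))) < 0 ->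
  (/ q) ^ (S N) * b2 = / q * b1 ->
  cexp (Cmult iota (RtoC (ln q)))
    = RtoC ((/ q) ^ 3 * Derive_n (sigma2 q s0 s1 s2 t0 t1) 2 0 * a2
            / (Derive_n (sigma1 s0 s1 s2) 2 0 * (/ q * b1))) ->
  (forall k : nat, (k <= N)%nat ->
     qpoch_inf (a1 / ((/ q) ^ k * b2)) q * qpoch_inf ((/ q) ^ k * b2 / a2) q <> 0) ->
  exists (P : nat -> R -> R) (d : nat -> C),
    (forall n : nat, (n <= N)%nat ->
       is_poly_deg n (P n) /\
       solves_qEHT q s0 s1 s2 t0 t1 (lambda_n q s0 s1 s2 t1 n) (P n) /\
       d n <> RtoC 0) /\
    (forall m n : nat, (m <= N)%nat -> (n <= N)%nat ->
       jackson_qinv q b2 N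
         (fun x => Cmult (RtoC (P n x * P m x)) (rho q b2 (/ q * b1) a1 a2 iota x))
       = (if Nat.eqb m n then d n else RtoC 0)).
Proof.
  intros Hq Ht1 HD1n HD2n Hs1 Hs2 Ha1 Ha2 Hab2 Hb21 HLam HN Hiota Hden.
  remember (Derive_n (sigma1 s0 s1 s2) 2 0) as D1 eqn:HD1.
  remember (Derive_n (sigma2 q s0 s1 s2 t0 t1) 2 0) as D2 eqn:HD2.
  assert (Hq0 : q <> 0) by lra.
  assert (E1 : s2 = D1 / 2 /\ s1 = - D1 / 2 * (a1 + b1) /\ s0 = D1 / 2 * a1 * b1).
  { pose proof (Hs1 0) as h0. pose proof (Hs1 1) as h1. pose proof (Hs1 (-1)) as h2.
    unfold sigma1 in h0, h1, h2. simpl in h0, h1, h2. nra. }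
  assert (E2 : q * s2 - (1 - q) * t1 = D2 / 2).
  { pose proof (Hs2 0) as h0. pose proof (Hs2 1) as h1. pose proof (Hs2 (-1)) as h2.
    unfold sigma2, sigma1, tau in h0, h1, h2. simpl in h0, h1, h2.
    assert (q * (1 - / q) = q - 1) by (field; auto). nra. }
  set (c2 := D2 / 2).
  assert (Hsig1 : forall x, sigma1 s0 s1 s2 x = s2 * (x - a1) * (x - b1)).
  { intro x. rewrite Hs1. destruct E1 as [-> _]. field. }
  assert (Hsig2 : forall x, sigma2 q s0 s1 s2 t0 t1 x = c2 * (x - a2) * (x - b2)).
  { intro x. rewrite Hs2. unfold c2. field. }
  assert (Hs2nz : s2 <> 0) by (destruct E1 as [-> _]; lra).
  assert (Hc2nz : c2 <> 0) by (unfold c2; lra).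
  assert (Hsc : s2 * c2 < 0).
  { unfold c2. rewrite <- E2. destruct E1 as [Es2 _].
    replace (/ 2 * D1) with s2 in HLam by lra.
    replace (q ^ 2 * ((/ q) ^ 2 * (1 + (1 - / q) * t1 / s2))) with (1 + (1 - / q) * t1 / s2) in HLam
      by (field; auto).
    replace (s2 * (q * s2 - (1 - q) * t1)) with (q * (s2 * s2) * (1 + (1 - / q) * t1 / s2)) by (field; auto).
    assert (0 < s2 * s2) by nra. assert (0 < q * (s2 * s2)) by nra. nra. }
  assert (HbN : xk q b2 N = b1).
  { unfold xk. apply (Rmult_eq_reg_l (/ q)). rewrite <- HN. simpl. ring. apply Rinv_neq_0_compat; auto. }
  assert (Hp1 : 1 < / q).
  { rewrite <- Rinv_1. apply Rinv_lt_contravar; lra. }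
  assert (Hb2 : 0 < b2) by lra.
  assert (Hxpos : forall k, 0 < xk q b2 k) by (intro; apply xk_pos; lra).
  assert (Hxgt : forall k, b2 < xk q b2 (S k)).
  { intro k. unfold xk. assert (Hk : 1 < (/ q) ^ (S k)) by exact (Rlt_pow (/ q) 0 (S k) Hp1 ltac:(lia)). nra. }
  assert (Hxge : forall k, b2 <= xk q b2 k).
  { intro k. destruct k. unfold xk; simpl; lra. apply Rlt_le, Hxgt. }
  assert (Hxlt : forall k, (k < N)%nat -> xk q b2 k < b1).
  { intros k Hk. rewrite <- HbN. unfold xk. pose proof (Rlt_pow (/ q) k N Hp1 Hk) as Hk'. nra. }
  assert (HxS : forall k, xk q b2 (S k) = / q * xk q b2 k).
  { intro k. unfold xk. simpl. ring. }
  set (P := fun n x => ev (cf q s0 s1 s2 t0 t1 n) n x).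
  set (lam := fun n => Lam q s2 t1 n).
  assert (Hdist : forall k n, (k < n)%nat -> lam n - lam k <> 0).
  { intros k n Hk. apply Lam_neq; auto. unfold c2 in Hsc. rewrite E2. exact Hsc. }
  assert (Hlam : forall n, lambda_n q s0 s1 s2 t1 n = lam n).
  { intro n. apply lambda_eq; auto. rewrite <- HD1. destruct E1 as [-> _]. field. }
  assert (Hsol : forall n, solves_qEHT q s0 s1 s2 t0 t1 (lam n) (P n)).
  { intro n. apply solves. auto. intros k Hk. apply Hdist. auto. }
  set (x := xk q b2).
  set (Fr := fun k => sigma1 s0 s1 s2 (x k) / sigma2 q s0 s1 s2 t0 t1 (x (S k))).
  set (om := prodseq Fr).
  set (W := fun k => Cmult (RtoC ((/ q) ^ k)) (rho q b2 (/ q * b1) a1 a2 iota (x k))).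
  assert (Hsig2nz : forall k, sigma2 q s0 s1 s2 t0 t1 (x (S k)) <> 0).
  { intro k. rewrite Hsig2. pose proof (Hxgt k). unfold x.
    apply Rmult_integral_contrapositive_currified; [apply Rmult_integral_contrapositive_currified|]; auto; lra. }
  assert (HWstep : forall k, (k < N)%nat -> W (S k) = Cmult (W k) (RtoC (Fr k))).
  { intros k Hk. set (R0 := (/ q) ^ 3 * D2 * a2 / (D1 * (/ q * b1))).
    assert (Hxx : 0 < x k) by apply Hxpos.
    pose proof (Hxge k) as Hge. pose proof (Hxgt k) as Hgt. fold x in Hge, Hgt.
    assert (Hc : cpow_abs (x k) iota = Cmult (cpow_abs (x (S k)) iota) (RtoC R0)).
    { apply (cpow_step iota (x k) (x (S k)) R0 q); [lra | apply Hxpos | | exact Hiota].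
      unfold x. rewrite xk_prev; auto. }
    pose proof (Hden k ltac:(lia)) as Hd1. pose proof (Hden (S k) ltac:(lia)) as Hd2.
    change ((/ q) ^ k * b2) with (x k) in Hd1. change ((/ q) ^ (S k) * b2) with (x (S k)) in Hd2.
    unfold x in Hd2. rewrite HxS in Hd2. fold x in Hd2.
    assert (Hbb : / q * b1 <> 0) by (apply Rmult_integral_contrapositive_currified; [apply Rinv_neq_0_compat|]; lra).
    pose proof (Rr_step q b2 (/ q * b1) a1 a2 (x k) Hq ltac:(lra) Ha1 Ha2 Hbb Hd1 Hd2) as Hr.
    set (T := (1 - / q * x k / (/ q * b1)) * (1 - a1 / x k) /
                ((1 - q * b2 / x k) * (1 - / q * x k / a2))) in Hr.
    assert (Hkey : T = q * (R0 * Fr k)).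
    { unfold T, R0, Fr. rewrite Hsig1, Hsig2. unfold x in *. rewrite HxS in *.
      destruct E1 as [Es2 _]. rewrite Es2. unfold c2. field.
      repeat split; try lra; nra. }
    unfold W. rewrite !rho_Rr, Hc. replace (x (S k)) with (/ q * x k) by (unfold x; symmetry; apply HxS). rewrite Hr, Hkey.
    destruct (cpow_abs (/ q * x k) iota) as [u v]. unfold Cmult, RtoC; simpl. f_equal; field; auto. }
  assert (HW : forall k, (k <= N)%nat -> W k = Cmult (W O) (RtoC (om k))).
  { induction k; intros Hk.
    - unfold om. simpl. destruct (W O) as [u v]. unfold Cmult, RtoC; simpl. f_equal; ring.
    - rewrite HWstep, IHk by lia. unfold om. simpl prodseq. destruct (W O) as [u v].
      unfold Cmult, RtoC; simpl. f_equal; ring. }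
  assert (Hjack : forall m n, jackson_qinv q b2 N
         (fun x => Cmult (RtoC (P n x * P m x)) (rho q b2 (/ q * b1) a1 a2 iota x))
       = Cmult (RtoC ((/ q - 1) * b2)) (Cmult (W O)
           (RtoC (psum (fun k => (P n (x k) * P m (x k)) * om k) N)))).
  { intros m n. unfold jackson_qinv. f_equal.
    rewrite <- (csum (fun k => P n (x k) * P m (x k)) W (W O) om N HW).
    apply sum_n_ext. intro k. unfold W, x, xk.
    destruct (rho q b2 (/ q * b1) a1 a2 iota ((/ q) ^ k * b2)) as [u v].
    unfold Cmult, RtoC; simpl. f_equal; ring. }
  assert (HFrpos : forall k, (k < N)%nat -> 0 < Fr k).
  { intros k Hk. unfold Fr. rewrite Hsig1, Hsig2.
    pose proof (Hxlt k Hk). pose proof (Hxge k). pose proof (Hxgt k). unfold x.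
    set (u := xk q b2 k - a1). set (v := xk q b2 k - b1).
    set (w1 := xk q b2 (S k) - a2). set (w2 := xk q b2 (S k) - b2).
    assert (0 < u) by (unfold u; lra). assert (v < 0) by (unfold v; lra).
    assert (0 < w1) by (unfold w1; lra). assert (0 < w2) by (unfold w2; lra).
    replace (s2 * u * v / (c2 * w1 * w2)) with ((s2 * c2) * (u * v) / (c2 * c2 * (w1 * w2)))
      by (field; repeat split; lra).
    apply Rdiv_lt_0_compat. assert (u * v < 0) by nra. nra.
    assert (0 < c2 * c2) by nra. assert (0 < w1 * w2) by nra. nra. }
  assert (Hompos : forall k, (k <= N)%nat -> 0 < om k).
  { induction k; intros Hk. unfold om; simpl; lra.
    unfold om; simpl prodseq. fold om. pose proof (HFrpos k ltac:(lia)). pose proof (IHk ltac:(lia)). nra. }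
  assert (Hpq : 1 - / q <> 0) by lra.
  assert (HB0 : Bco q s0 s1 s2 t0 t1 (x O) = 0).
  { unfold Bco. rewrite Hsig2. unfold x, xk. simpl. unfold Rdiv. ring. }
  assert (HAN : Aco q s0 s1 s2 (x N) = 0).
  { unfold Aco. rewrite Hsig1. unfold x. rewrite HbN. unfold Rdiv. ring. }
  assert (Hgrid : forall n k, (k <= N)%nat ->
    Aco q s0 s1 s2 (x k) * (P n (x (S k)) - P n (x k))
    + Bco q s0 s1 s2 t0 t1 (x k) * (P n (x (k - 1)%nat) - P n (x k)) = - lam n * P n (x k)).
  { intros n k Hk.
    pose proof (grid_eq q s0 s1 s2 t0 t1 (lam n) (P n) (x k) Hq ltac:(specialize (Hxpos k); unfold x; lra) (Hsol n)) as G.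
    unfold x in G |- *. rewrite <- HxS in G. destruct k.
    - fold x in G |- *. rewrite HB0 in G |- *. lra.
    - replace (S k - 1)%nat with k by lia. rewrite xk_prev in G by auto. exact G. }
  assert (Hbal : forall k, (k < N)%nat ->
    om (S k) * Bco q s0 s1 s2 t0 t1 (x (S k)) = om k * Aco q s0 s1 s2 (x k)).
  { intros k Hk. pose proof (Hsig2nz k) as Hnz. pose proof (Hxpos k) as Hxk.
    unfold om; simpl prodseq; fold om. unfold Fr, Aco, Bco. unfold x in *. rewrite HxS in *.
    field. repeat split; try lra; auto. }
  assert (Horth : forall m n, (m <= N)%nat -> (n <= N)%nat -> m <> n ->
     psum (fun k => (P n (x k) * P m (x k)) * om k) N = 0).
  { intros m n Hm Hn Hmn.
    rewrite (psum_ext _ (fun k => om k * P n (x k) * P m (x k))) by (intros; ring).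
    apply (orth_grid om (fun k => Aco q s0 s1 s2 (x k)) (fun k => Bco q s0 s1 s2 t0 t1 (x k))
             (fun k => P n (x k)) (fun k => P m (x k)) (lam n) (lam m) N).
    - simpl. rewrite HB0. ring.
    - exact Hbal.
    - exact HAN.
    - intros k Hk. apply Hgrid; auto.
    - intros k Hk. apply Hgrid; auto.
    - intro E. destruct (Nat.lt_trichotomy m n) as [H|[H|H]].
      + apply (Hdist m n H). lra.
      + contradiction.
      + apply (Hdist n m H). lra. }
  assert (HG : forall n, (n <= N)%nat -> psum (fun k => (P n (x k) * P n (x k)) * om k) N <> 0).
  { intros n Hn Z.
    assert (Hz : forall k, (k <= N)%nat -> P n (x k) * P n (x k) * om k = 0).
    { apply psum_nonneg_zero; auto. intros k Hk. pose proof (Hompos k Hk). nra. }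
    assert (Hc : cf q s0 s1 s2 t0 t1 n n = 0).
    { apply (vanish q b2 Hq Hb2 n _ O (cf_supp q s0 s1 s2 t0 t1 n)).
      intros k Hk. specialize (Hz k ltac:(lia)). pose proof (Hompos k ltac:(lia)).
      apply Rmult_integral in Hz. destruct Hz as [Hz|Hz]; [|lra].
      apply Rmult_integral in Hz. destruct Hz; auto. }
    rewrite cf_n in Hc. lra. }
  assert (HW0 : W O <> RtoC 0).
  { unfold W. apply real_cmult_nz; [|simpl; lra]. rewrite rho_Rr. apply cmult_real_nz.
    unfold cpow_abs. apply cexp_nz.
    unfold Rr, x, xk. unfold Rdiv at 1. apply Rmult_integral_contrapositive_currified.
    - apply Rmult_integral_contrapositive_currified; apply qpoch_inf_nz; auto; simpl.
      + replace (q * b2 / (1 * b2)) with q by (field; lra). lra.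
      + replace (1 * b2 / (/ q * b1)) with (q * b2 / b1) by (field; lra). split.
        apply Rlt_le, Rdiv_lt_0_compat; nra.
        apply (Rmult_lt_reg_r b1). lra. unfold Rdiv. rewrite Rmult_assoc, Rinv_l by lra. nra.
    - apply Rinv_neq_0_compat. apply (Hden O). lia. }
  exists P, (fun n => jackson_qinv q b2 N
         (fun x => Cmult (RtoC (P n x * P n x)) (rho q b2 (/ q * b1) a1 a2 iota x))).
  split.
  - intros n Hn. split; [|split].
    + exists (cf q s0 s1 s2 t0 t1 n). split. rewrite cf_n. lra.
      intro y. unfold P. rewrite sum_n_psum. reflexivity.
    + rewrite Hlam. apply Hsol.
    + rewrite Hjack. apply real_cmult_nz; [apply cmult_real_nz; [exact HW0 | apply HG; auto] |].
      apply Rmult_integral_contrapositive_currified; lra.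
  - intros m n Hm Hn. destruct (Nat.eqb_spec m n) as [->|Hmn]. reflexivity.
    rewrite Hjack, Horth by auto. destruct (W O) as [u v]. unfold Cmult, RtoC; simpl. f_equal; ring.
Qed.
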